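(* Let $n>2$ be an integer, $a\in\mathbb{R}$ with $a\neq0$, and $b\in\{1,-1\}$. Put $\varphi=2\pi/n$, $p=\lfloor (n-1)/2\rfloor$, $q=\lfloor n/2\rfloor$, and for $c\in\mathbb{R}$ define \[\lambda_k(c)=c+2a\cos(k\varphi)\ (k=1,\dots,n-1),\quad \lambda_{\mathrm{sep}}(c)=c+2a,\quad \lambda_{\mathrm{lim}}(c)=c-2a,\] \[\lambda_\pm(c)=\tfrac12\Bigl(2a-(n-1)c\pm\sqrt{\bigl(2a+(n+1)c\bigr)^2+4n}\Bigr).\] Then: (a) for every $k=1,\dots,n-1$ and every $c$, $\lambda_{\mathrm{sep}}(c)>\lambda_k(c)$ if $a>0$, and $\lambda_{\mathrm{sep}}(c)<\lambda_k(c)$ if $a<0$; (b) $\lambda_k=\lambda_{n-k}$ for $k=1,\dots,p$; (c) the sequence $(\lambda_1,\dots,\lambda_q)$ is strictly decreasing if $a>0$ and strictly increasing if $a<0$; all $\lambda_k$ are bounded (below if $a>0$, above if $a<0$) by $\lambda_{\mathrm{lim}}=c-2a$, and for even $n$ one has $\lambda_q=\lambda_{n/2}=c-2a$; (d) for $a>0$ (resp. $a<0$) each curve $\lambda=\lambda_k(c)$ meets the curve $\lambda=\lambda_-(c)$ (resp. $\lambda=\lambda_+(c)$) at exactly one point $\mathsf C_k$, whose abscissa is \[c_k=\frac{4a^2\cos(k\varphi)\bigl(1-\cos(k\varphi)\bigr)+n}{2(n+1)a\bigl(\cos(k\varphi)-1\bigr)};\] as $k$ increases from $1$ to $q$, the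 $c_k$ form an increasing sequence if $a>0$ and a decreasing sequence if $a<0$.
   Context: The functions $\lambda_\pm(c)$ and $\lambda_k(c)$ are the eigenvalues of the $(n+1)\times(n+1)$ symmetric matrix $m_n(a,b,c)$ with $b^2=1$: rows/columns indexed $0,\dots,n$, $(0,0)$-entry $-nc$, $(0,j)$- and $(j,0)$-entries $b$ ($j=1,\dots,n$), lower-right block the circulant $\mathrm{circ}(c,a,0,\dots,0,a)$. *)

(* Defs.v *)
From Stdlib Require Import Reals Lra Lia.
Open Scope R_scope.

Definition phi (n : nat) : R := 2 * PI / INR n.

Definition lam_k (n : nat) (a : R) (k : nat) (c : R) : R :=
  c + 2 * a * cos (INR k * phi n).

Definition lam_sep (a c : R) : R := c + 2 * a.
Definition lam_lim (a c : R) : R := c - 2 * a.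

Definition lam_disc (n : nat) (a c : R) : R :=
  (2 * a + (INR n + 1) * c) ^ 2 + 4 * INR n.

Definition lam_plus (n : nat) (a c : R) : R :=
  / 2 * (2 * a - (INR n - 1) * c + sqrt (lam_disc n a c)).
Definition lam_minus (n : nat) (a c : R) : R :=
  / 2 * (2 * a - (INR n - 1) * c - sqrt (lam_disc n a c)).

Definition c_k (n : nat) (a : R) (k : nat) : R :=
  (4 * a ^ 2 * cos (INR k * phi n) * (1 - cos (INR k * phi n)) + INR n)
  / (2 * (INR n + 1) * a * (cos (INR k * phi n) - 1)).

Definition p_of (n : nat) : nat := Nat.div (n - 1) 2.
Definition q_of (n : nat) : nat := Nat.div n 2.

(* Main.v *)
Require Import Defs.
From Stdlib Require Import Reals.
From Stdlib Require Import Lra Lia.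
Open Scope R_scope.

Lemma cos_sym2 x : cos (2*PI - x) = cos x.
Proof. rewrite cos_minus, cos_2PI, sin_2PI; ring. Qed.

Lemma ang_eq (n k : nat) : (0 < n)%nat ->
  INR k * phi n = 2 * PI * (INR k / INR n).
Proof. intros Hn. unfold phi. assert (0 < INR n) by (apply lt_0_INR; lia). field; lra. Qed.

Lemma cos_lt1 (n k : nat) : (1 <= k <= n - 1)%nat -> cos (INR k * phi n) < 1.
Proof.
  intros Hk. assert (Hn : (0 < n)%nat) by lia.
  rewrite ang_eq by lia.
  assert (HN : 0 < INR n) by (apply lt_0_INR; lia).
  assert (HK : 1 <= INR k) by (apply (le_INR 1); lia).
  assert (HKN : INR k < INR n) by (apply lt_INR; lia).
  set (u := INR k / INR n).
  assert (Hu : u * INR n = INR k) by (unfold u; field; lra).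
  assert (0 < u < 1) by (split; nra).
  pose proof PI_RGT_0.
  destruct (Rle_or_lt (2*PI*u) PI) as [H1|H1].
  - rewrite <- cos_0. apply cos_decreasing_1; nra.
  - rewrite <- cos_sym2. rewrite <- cos_0. apply cos_decreasing_1; nra.
Qed.

Lemma cos_mono (n k l : nat) : (2 < n)%nat -> (1 <= k)%nat -> (k < l)%nat -> (l <= q_of n)%nat ->
  cos (INR l * phi n) < cos (INR k * phi n).
Proof.
  intros Hn Hk Hkl Hl. unfold q_of in Hl.
  assert (Hq : (2 * (n / 2) <= n)%nat) by (apply Nat.mul_div_le; lia).
  rewrite !ang_eq by lia.
  assert (HN : 0 < INR n) by (apply lt_0_INR; lia).
  assert (HK : 1 <= INR k) by (apply (le_INR 1); lia).
  assert (HKL : INR k < INR l) by (apply lt_INR; lia).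
  assert (HLN : 2 * INR l <= INR n).
  { replace 2 with (INR 2) by (simpl; ring). rewrite <- mult_INR. apply le_INR; lia. }
  set (u := INR k / INR n). set (v := INR l / INR n).
  assert (Hu : u * INR n = INR k) by (unfold u; field; lra).
  assert (Hv : v * INR n = INR l) by (unfold v; field; lra).
  pose proof PI_RGT_0.
  assert (0 < u) by nra. assert (u < v) by nra. assert (2 * v <= 1) by nra.
  apply cos_decreasing_1; nra.
Qed.

Lemma key_minus (N a t c : R) : 0 < N -> 0 < a -> t < 1 ->
  (c + 2 * a * t = / 2 * (2 * a - (N - 1) * c - sqrt ((2 * a + (N + 1) * c) ^ 2 + 4 * N))
   <-> c = (4 * a ^ 2 * t * (1 - t) + N) / (2 * (N + 1) * a * (t - 1))).
Proof.
  intros HN Ha Ht.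
  assert (HD : 0 <= (2 * a + (N + 1) * c) ^ 2 + 4 * N) by (pose proof (pow2_ge_0 (2 * a + (N + 1) * c)); lra).
  split.
  - intros H.
    assert (Hs : sqrt ((2 * a + (N + 1) * c) ^ 2 + 4 * N) = 2*a*(1-2*t) - (N+1)*c) by lra.
    assert (Hsq : (2 * a + (N + 1) * c) ^ 2 + 4 * N = (2*a*(1-2*t) - (N+1)*c)^2).
    { rewrite <- Hs. rewrite pow2_sqrt; auto. }
    assert (Hc : c * (2 * (N + 1) * a * (t - 1)) = 4 * a ^ 2 * t * (1 - t) + N).
    { apply Rminus_diag_uniq.  match type of Hsq with ?L = ?R =>
        transitivity (-(L - R)/4); [field| rewrite Hsq; field] end. }
    rewrite <- Hc. field. split; lra.
  - intros Hc.
    assert (Hsq : (2 * a + (N + 1) * c) ^ 2 + 4 * N = (2*a*(1-t) + N/(2*a*(1-t)))^2).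
    { subst c. field. split; lra. }
    assert (HR : 0 <= 2*a*(1-t) + N/(2*a*(1-t))).
    { assert (0 < 2*a*(1-t)) by nra. assert (0 < N/(2*a*(1-t))) by (apply Rdiv_lt_0_compat; lra). lra. }
    rewrite Hsq, sqrt_pow2 by exact HR.
    assert (Hc' : (N+1) * c = -2*a*t - N/(2*a*(1-t))).
    { subst c. field. split; lra. }
    lra.
Qed.

Lemma key_plus (N a t c : R) : 0 < N -> a < 0 -> t < 1 ->
  (c + 2 * a * t = / 2 * (2 * a - (N - 1) * c + sqrt ((2 * a + (N + 1) * c) ^ 2 + 4 * N))
   <-> c = (4 * a ^ 2 * t * (1 - t) + N) / (2 * (N + 1) * a * (t - 1))).
Proof.
  intros HN Ha Ht.
  assert (HD : 0 <= (2 * a + (N + 1) * c) ^ 2 + 4 * N) by (pose proof (pow2_ge_0 (2 * a + (N + 1) * c)); lra).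
  split.
  - intros H.
    assert (Hs : sqrt ((2 * a + (N + 1) * c) ^ 2 + 4 * N) = -(2*a*(1-2*t) - (N+1)*c)) by lra.
    assert (Hsq : (2 * a + (N + 1) * c) ^ 2 + 4 * N = (-(2*a*(1-2*t) - (N+1)*c))^2).
    { rewrite <- Hs. rewrite pow2_sqrt; auto. }
    assert (Hc : c * (2 * (N + 1) * a * (t - 1)) = 4 * a ^ 2 * t * (1 - t) + N).
    { apply Rminus_diag_uniq.  match type of Hsq with ?L = ?R =>
        transitivity (-(L - R)/4); [field| rewrite Hsq; field] end. }
    rewrite <- Hc. field. split; lra.
  - intros Hc.
    assert (Hsq : (2 * a + (N + 1) * c) ^ 2 + 4 * N = (-(2*a*(1-t) + N/(2*a*(1-t))))^2).
    { subst c. field. split; lra. }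
    assert (HR : 0 <= -(2*a*(1-t) + N/(2*a*(1-t)))).
    { assert (0 < -(2*a*(1-t))) by nra.
      assert (0 < N/(-(2*a*(1-t)))) by (apply Rdiv_lt_0_compat; lra).
      replace (N/(2*a*(1-t))) with (-(N/(-(2*a*(1-t))))) by (field; split; lra). lra. }
    rewrite Hsq, sqrt_pow2 by exact HR.
    assert (Hc' : (N+1) * c = -2*a*t - N/(2*a*(1-t))).
    { subst c. field. split; lra. }
    lra.
Qed.

Lemma ck_form (N a t : R) : 0 < N -> a <> 0 -> t < 1 ->
  (4 * a ^ 2 * t * (1 - t) + N) / (2 * (N + 1) * a * (t - 1))
  = - (2 * a * t / (N + 1)) - N / (2 * (N + 1) * a) * / (1 - t).
Proof. intros. field. repeat split; lra. Qed.

Theorem lemma2 (n : nat) (a b : R) :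
  (2 < n)%nat -> a <> 0 -> (b = 1 \/ b = -1) ->
  (* (a) *)
  (forall (k : nat) (c : R), (1 <= k <= n - 1)%nat ->
     (0 < a -> lam_sep a c > lam_k n a k c) /\
     (a < 0 -> lam_sep a c < lam_k n a k c)) /\
  (* (b) *)
  (forall (k : nat) (c : R), (1 <= k <= p_of n)%nat ->
     lam_k n a k c = lam_k n a (n - k) c) /\
  (* (c) *)
  ((forall (k l : nat) (c : R), (1 <= k)%nat -> (k < l)%nat -> (l <= q_of n)%nat ->
      (0 < a -> lam_k n a k c > lam_k n a l c) /\
      (a < 0 -> lam_k n a k c < lam_k n a l c)) /\
   (forall (k : nat) (c : R), (1 <= k <= n - 1)%nat ->
      (0 < a -> lam_lim a c <= lam_k n a k c) /\
      (a < 0 -> lam_k n a k c <= lam_lim a c)) /\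
   (Nat.Even n -> forall c : R, lam_k n a (q_of n) c = c - 2 * a)) /\
  (* (d) *)
  ((forall k : nat, (1 <= k <= n - 1)%nat ->
      (0 < a -> forall c : R, lam_k n a k c = lam_minus n a c <-> c = c_k n a k) /\
      (a < 0 -> forall c : R, lam_k n a k c = lam_plus n a c <-> c = c_k n a k)) /\
   (forall k l : nat, (1 <= k)%nat -> (k < l)%nat -> (l <= q_of n)%nat ->
      (0 < a -> c_k n a k < c_k n a l) /\
      (a < 0 -> c_k n a k > c_k n a l))).
Proof.
  intros Hn Ha _.
  assert (HN : 0 < INR n) by (apply lt_0_INR; lia).
  split; [|split; [|split; [split; [|split]|split]]].
  - intros k c Hk. pose proof (cos_lt1 n k Hk). unfold lam_sep, lam_k. split; intros; nra.
  - intros k c Hk. unfold p_of in Hk.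
    assert (Hq : (2 * ((n-1) / 2) <= n - 1)%nat) by (apply Nat.mul_div_le; lia).
    unfold lam_k. f_equal. f_equal.
    rewrite minus_INR by lia.
    replace ((INR n - INR k) * phi n) with (2 * PI - INR k * phi n).
    + rewrite cos_sym2. reflexivity.
    + unfold phi. field. lra.
  - intros k l c Hk Hkl Hl. pose proof (cos_mono n k l Hn Hk Hkl Hl).
    unfold lam_k. split; intros; nra.
  - intros k c Hk. pose proof (COS_bound (INR k * phi n)). unfold lam_k, lam_lim.
    split; intros; nra.
  - intros [m Hm] c. unfold q_of, lam_k.
    replace (n / 2)%nat with m by (subst n; rewrite Nat.mul_comm, Nat.div_mul; lia).
    replace (INR m * phi n) with PI.
    + rewrite cos_PI. ring.
    + unfold phi. subst n. rewrite mult_INR. simpl (INR 2). field.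
      assert (0 < INR m) by (apply lt_0_INR; lia). lra.
  - intros k Hk. pose proof (cos_lt1 n k Hk). split.
    + intros Ha' c. unfold lam_k, lam_minus, lam_disc, c_k. apply key_minus; lra.
    + intros Ha' c. unfold lam_k, lam_plus, lam_disc, c_k. apply key_plus; lra.
  - intros k l Hk Hkl Hl. pose proof (cos_mono n k l Hn Hk Hkl Hl).
    assert (Hl1 : (1 <= l <= n - 1)%nat).
    { unfold q_of in Hl. assert (Hq : (2 * (n / 2) <= n)%nat) by (apply Nat.mul_div_le; lia). lia. }
    pose proof (cos_lt1 n l Hl1). assert (Hk1 : (1 <= k <= n - 1)%nat) by lia. pose proof (cos_lt1 n k Hk1).
    unfold c_k. rewrite !ck_form; [| lra | exact Ha | lra | lra | exact Ha | lra].
    set (tk := cos (INR k * phi n)) in *. set (tl := cos (INR l * phi n)) in *.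
    assert (Hi : / (1 - tl) < / (1 - tk)) by (apply Rinv_lt_contravar; nra).
    assert (HN1 : 0 < INR n + 1) by lra.
    assert (HiN : 0 < / (INR n + 1)) by (apply Rinv_0_lt_compat; lra).
    set (K := INR n / (2 * (INR n + 1) * a)).
    split; intros Ha'.
    + assert (HA1 : 2 * a * tk / (INR n + 1) > 2 * a * tl / (INR n + 1)).
      { unfold Rdiv. apply Rmult_lt_compat_r; [lra | nra]. }
      assert (HK : 0 < K) by (apply Rdiv_lt_0_compat; nra).
      assert (K * / (1 - tl) < K * / (1 - tk)) by (apply Rmult_lt_compat_l; lra).
      lra.
    + assert (HA1 : 2 * a * tk / (INR n + 1) < 2 * a * tl / (INR n + 1)).
      { unfold Rdiv. apply Rmult_lt_compat_r; [lra | nra]. }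
      assert (Hin : / (2 * (INR n + 1) * a) < 0) by (apply Rinv_lt_0_compat; nra).
      assert (HK : K < 0) by (unfold K, Rdiv; nra).
      assert (-K * / (1 - tl) < -K * / (1 - tk)) by (apply Rmult_lt_compat_l; lra).
      lra.
Qed.
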